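(* (a) The cell $S_{z_2,z_2}$ is the disjoint union of exactly three $G$-orbits of points $(P,Pz_2,Pz_2n)$: $n=n(0,0,1)$, dimension $7$, stabilizer $\{d(1/a^2,a,a):a\in\mathbb{R}^\times\}$; $n=n(0,1,0)$, dimension $6$, stabilizer $\left\{\begin{pmatrix}a&z&0\\0&1/a^2&0\\0&0&a\end{pmatrix}:a\in\mathbb{R}^\times,z\in\mathbb{R}\right\}$; $n=n(0,0,0)$, dimension $5$, stabilizer $D\cdot\{n(x,0,0):x\in\mathbb{R}\}$. (b) The cell $S_{z_2,s_1}$ is a single $G$-orbit, that of $(P,Pz_2,Ps_1)$, of dimension $6$ with stabilizer $D$; the cell $S_{z_2,1}$ is a single $G$-orbit, that of $(P,Pz_2,P)$, of dimension $5$ with stabilizer $D\cdot\{n(x,0,0):x\in\mathbb{R}\}$. (c) The cell $S_{z_2,s_2}$ is the disjoint union of exactly two $G$-orbits of points $(P,Pz_2,Ps_2n)$: $n=n(0,0,1)$, dimension $6$, stabilizer $\left\{\begin{pmatrix}1/a^2&x&0\\0&a&0\\0&0&a\end{pmatrix}:a\in\mathbb{R}^\times,x\in\mathbb{R}\right\}$; $n=n(0,0,0)$, dimension $5$, stabilizer $D\cdot\{n(x,0,0):x\in\mathbb{R}\}$.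
   Context: $G=\mathrm{SL}_3(\mathbb{R})$, $P$ the upper triangular matrices in $G$, $D$ the diagonal matrices in $G$; $G$ acts on $X=(P\backslash G)^3$ by right multiplication in each coordinate. $n(x,y,z)=\begin{pmatrix}1&x&y\\0&1&z\\0&0&1\end{pmatrix}$, $d(a,b,c)=\operatorname{diag}(a,b,c)$. $1$ is the identity matrix, $s_1=\begin{pmatrix}0&1&0\\1&0&0\\0&0&-1\end{pmatrix}$, $s_2=\begin{pmatrix}-1&0&0\\0&0&1\\0&1&0\end{pmatrix}$, $z_2=\begin{pmatrix}0&0&1\\-1&0&0\\0&-1&0\end{pmatrix}$. $S_{v,w}=\big(\{P\}\times P\backslash PvP\times P\backslash PwP\big)\cdot G$. The stabilizer of $(P,Pv,Pwn)$ is $P\cap v^{-1}Pv\cap (wn)^{-1}P(wn)$. *)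

(* Defs.v *)
From HB Require Import structures.
From mathcomp Require Import all_boot all_order all_algebra.
From mathcomp Require Import reals.
Set Implicit Arguments. Unset Strict Implicit. Unset Printing Implicit Defensive.
Import Order.TTheory GRing.Theory Num.Theory.
Local Open Scope ring_scope.

Section Defs.
Variable R : realType.

Definition mx3 (a b c d e f g h k : R) : 'M[R]_3 :=
  \matrix_(i < 3, j < 3)
    match nat_of_ord i, nat_of_ord j with
    | 0, 0 => a | 0, 1 => b | 0, _ => c
    | 1, 0 => d | 1, 1 => e | 1, _ => f
    | _, 0 => g | _, 1 => h | _, _ => k
    end.

Definition nmx (x y z : R) : 'M[R]_3 := mx3 1 x y 0 1 z 0 0 1.
Definition dmx (a b c : R) : 'M[R]_3 := mx3 a 0 0 0 b 0 0 0 c.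

Definition s1 : 'M[R]_3 := mx3 0 1 0 1 0 0 0 0 (-1).
Definition s2 : 'M[R]_3 := mx3 (-1) 0 0 0 0 1 0 1 0.
Definition z2 : 'M[R]_3 := mx3 0 0 1 (-1) 0 0 0 (-1) 0.

Definition inG (g : 'M[R]_3) : Prop := \det g = 1.
Definition upper (g : 'M[R]_3) : Prop := forall i j : 'I_3, (j < i)%N -> g i j = 0.
Definition inP (g : 'M[R]_3) : Prop := inG g /\ upper g.
Definition inD (g : 'M[R]_3) : Prop := exists a b c : R, a * b * c = 1 /\ g = dmx a b c.
Definition inPvP (v g : 'M[R]_3) : Prop :=
  exists p q, inP p /\ inP q /\ g = p *m v *m q.

(* A point of X = (P\G)^3 is represented by a triple (g1,g2,g3) of elements of G,
   standing for (P g1, P g2, P g3). *)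
Definition trip := ('M[R]_3 * 'M[R]_3 * 'M[R]_3)%type.
Definition t1 (x : trip) := x.1.1.
Definition t2 (x : trip) := x.1.2.
Definition t3 (x : trip) := x.2.
Definition is_pt (x : trip) : Prop := inG (t1 x) /\ inG (t2 x) /\ inG (t3 x).

(* P a = P b  iff  a b^-1 in P *)
Definition same_coset (a b : 'M[R]_3) : Prop := inP (a *m invmx b).
Definition same_pt (x y : trip) : Prop :=
  same_coset (t1 x) (t1 y) /\ same_coset (t2 x) (t2 y) /\ same_coset (t3 x) (t3 y).
Definition act (x : trip) (g : 'M[R]_3) : trip := (t1 x *m g, t2 x *m g, t3 x *m g).
Definition same_orbit (x y : trip) : Prop := exists g, inG g /\ same_pt (act x g) y.
Definition stab (x : trip) (g : 'M[R]_3) : Prop := inG g /\ same_pt (act x g) x.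
Definition base_pt (a b : 'M[R]_3) : trip := (1%:M, a, b).
(* the cell S_{v,w} = ({P} x P\PvP x P\PwP) . G *)
Definition in_cell (v w : 'M[R]_3) (x : trip) : Prop :=
  exists a b g, inPvP v a /\ inPvP w b /\ inG g /\ same_pt x (act (base_pt a b) g).

(* Lie algebra of the stabilizer of x: the stabilizer is the intersection of the
   conjugates g_i^-1 P g_i, so its Lie algebra is the set of traceless X with
   g_i X g_i^-1 upper triangular for i = 1,2,3. *)
Definition stab_lie (x : trip) (X : 'M[R]_3) : Prop :=
  \tr X = 0 /\ upper (t1 x *m X *m invmx (t1 x))
  /\ upper (t2 x *m X *m invmx (t2 x)) /\ upper (t3 x *m X *m invmx (t3 x)).
(* The G-orbit of x has dimension d: dim G (= 8) = d + dim Lie(Stab x). *)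
Definition orbit_dim (x : trip) (d : nat) : Prop :=
  exists U : {vspace 'M[R]_3},
    (forall X, X \in U <-> stab_lie x X) /\ (\dim U + d = 8)%N.

End Defs.

(* Main.v *)
Require Import Defs.
From HB Require Import structures.
From mathcomp Require Import all_boot all_order all_algebra.
From mathcomp Require Import reals.
From mathcomp Require Import ring lra.
Set Implicit Arguments. Unset Strict Implicit. Unset Printing Implicit Defensive.
Import Order.TTheory GRing.Theory Num.Theory.
Local Open Scope ring_scope.

Section M3.
Variable R : realType.
Local Notation M := 'M[R]_3.
Definition i0 : 'I_3 := @Ordinal 3 0 isT.
Definition i1 : 'I_3 := @Ordinal 3 1 isT.
Definition i2 : 'I_3 := @Ordinal 3 2 isT.

Lemma mx3E (A : M) : A = mx3 (A i0 i0) (A i0 i1) (A i0 i2) (A i1 i0) (A i1 i1) (A i1 i2) (A i2 i0) (A i2 i1) (A i2 i2).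
Proof.
apply/matrixP => i j; rewrite !mxE.
case: i => [[|[|[|//]]] Hi]; case: j => [[|[|[|//]]] Hj]; congr (A _ _); exact: val_inj.
Qed.

Lemma mx3_mul (a b c d e f g h k a' b' c' d' e' f' g' h' k' : R) :
  mx3 a b c d e f g h k *m mx3 a' b' c' d' e' f' g' h' k' =
  mx3 (a*a'+b*d'+c*g') (a*b'+b*e'+c*h') (a*c'+b*f'+c*k')
      (d*a'+e*d'+f*g') (d*b'+e*e'+f*h') (d*c'+e*f'+f*k')
      (g*a'+h*d'+k*g') (g*b'+h*e'+k*h') (g*c'+h*f'+k*k').
Proof.
apply/matrixP => i j; rewrite !mxE !big_ord_recr big_ord0 /= !mxE /=.
case: i => [[|[|[|//]]] Hi]; case: j => [[|[|[|//]]] Hj] /=; ring.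
Qed.

Lemma mx3_inj (a b c d e f g h k a' b' c' d' e' f' g' h' k' : R) :
  mx3 a b c d e f g h k = mx3 a' b' c' d' e' f' g' h' k' ->
  [/\ a = a', b = b', c = c', d = d' & [/\ e = e', f = f', g = g', h = h' & k = k']].
Proof.
move/matrixP => H.
have := H i0 i0; have := H i0 i1; have := H i0 i2; have := H i1 i0; have := H i1 i1;
have := H i1 i2; have := H i2 i0; have := H i2 i1; have := H i2 i2.
rewrite !mxE /= => -> -> -> -> -> -> -> -> ->; by split; split.
Qed.

Lemma det_mx3 (a b c d e f g h k : R) :
  \det (mx3 a b c d e f g h k) = a*e*k - a*f*h - b*d*k + b*f*g + c*d*h - c*e*g.
Proof.
rewrite (expand_det_row _ i0) !big_ord_recr big_ord0 /= /cofactor !mxE /=.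
rewrite !(expand_det_row _ ord0) !big_ord_recr big_ord0 /= /cofactor !mxE /=.
rewrite !big_ord0 /= !det_mx11 !mxE /=; ring.
Qed.

Lemma upper_mx3 (a b c d e f g h k : R) :
  upper (mx3 a b c d e f g h k) <-> [/\ d = 0, g = 0 & h = 0].
Proof.
split.
  move=> H; have := H i1 i0 isT; have := H i2 i0 isT; have := H i2 i1 isT.
  by rewrite !mxE /= => -> -> ->.
case=> -> -> -> i j; rewrite mxE.
by case: i => [[|[|[|//]]] Hi]; case: j => [[|[|[|//]]] Hj].
Qed.

Lemma one_mx3 : (1%:M : M) = mx3 1 0 0 0 1 0 0 0 1.
Proof.
apply/matrixP => i j; rewrite !mxE.
by case: i => [[|[|[|//]]] Hi]; case: j => [[|[|[|//]]] Hj].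
Qed.

Lemma inG_unit (a : M) : inG a -> a \in unitmx.
Proof. by rewrite /inG unitmxE => ->; rewrite unitr1. Qed.

Lemma inG_mul (a b : M) : inG a -> inG b -> inG (a *m b).
Proof. by rewrite /inG det_mulmx => -> ->; rewrite mulr1. Qed.

Lemma inG_inv (a : M) : inG a -> inG (invmx a).
Proof. by rewrite /inG det_inv => ->; rewrite invr1. Qed.

Lemma inG1 : inG (1%:M : M).
Proof. by rewrite /inG det1. Qed.

Lemma upper_mul (a b : M) : upper a -> upper b -> upper (a *m b).
Proof.
move=> Ha Hb i j ji; rewrite mxE; apply: big1 => k _.
case: (ltnP k i) => [ki|ik]; first by rewrite Ha // mul0r.
by rewrite Hb ?mulr0 //; apply: leq_trans ji ik.
Qed.

Lemma invmx_eq (A B : M) : A *m B = 1%:M -> invmx A = B.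
Proof.
move=> AB; have [uA _] := mulmx1_unit AB.
by rewrite -(mulKmx uA B) AB mulmx1.
Qed.

Lemma upper1 : upper (1%:M : M).
Proof. by rewrite one_mx3; apply/upper_mx3. Qed.

Lemma upperE (a : M) : upper a -> a = mx3 (a i0 i0) (a i0 i1) (a i0 i2) 0 (a i1 i1) (a i1 i2) 0 0 (a i2 i2).
Proof. move=> H; rewrite {1}(mx3E a); by rewrite (H i1 i0) ?(H i2 i0) ?(H i2 i1). Qed.

Lemma inP_inv (a : M) : inP a -> inP (invmx a).
Proof.
case=> Ga Ua; split; first exact: inG_inv.
move: Ga; rewrite /inG (upperE Ua) det_mx3.
set x := a i0 i0; set y := a i0 i1; set z := a i0 i2; set u := a i1 i1; set v := a i1 i2; set w := a i2 i2.
move=> D.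
have D' : x * u * w = 1 by rewrite -D; ring.
have x0 : x != 0 by apply/eqP => x0; move: D'; rewrite x0 !mul0r => /eqP; rewrite eq_sym oner_eq0.
have u0 : u != 0 by apply/eqP => u0; move: D'; rewrite u0 mulr0 mul0r => /eqP; rewrite eq_sym oner_eq0.
have w0 : w != 0 by apply/eqP => w0; move: D'; rewrite w0 mulr0 => /eqP; rewrite eq_sym oner_eq0.
rewrite (@invmx_eq _ (mx3 (x^-1) (- y / (x*u)) ((y*v - z*u)/(x*u*w)) 0 (u^-1) (- v/(u*w)) 0 0 (w^-1))).
  by apply/upper_mx3.
rewrite mx3_mul one_mx3; congr mx3; field; by rewrite ?x0 ?u0 ?w0.
Qed.

Lemma inP_mul (a b : M) : inP a -> inP b -> inP (a *m b).
Proof. by case=> ? ? [? ?]; split; [apply: inG_mul | apply: upper_mul]. Qed.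

Lemma inP1 : inP (1%:M : M).
Proof. split; [exact: inG1 | exact: upper1]. Qed.

Lemma scP (a b : M) : inG b -> (same_coset a b <-> exists p, inP p /\ a = p *m b).
Proof.
move=> /inG_unit ub; split.
  by move=> H; exists (a *m invmx b); split => //; rewrite mulmxKV.
by case=> p [Pp ->]; rewrite /same_coset mulmxK.
Qed.

Lemma sc_refl (a : M) : inG a -> same_coset a a.
Proof. by move=> Ga; apply/(scP _ Ga); exists 1%:M; rewrite mul1mx; split => //; exact: inP1. Qed.

Lemma sc_sym (a b : M) : inG a -> inG b -> same_coset a b -> same_coset b a.
Proof.
move=> Ga Gb /(scP _ Gb) [p [Pp E]]; apply/(scP _ Ga); exists (invmx p); split; first exact: inP_inv.
rewrite E.
by rewrite mulmxA mulVmx ?mul1mx //; apply: inG_unit; case: Pp.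
Qed.

Lemma sc_trans (a b c : M) : inG b -> inG c -> same_coset a b -> same_coset b c -> same_coset a c.
Proof.
move=> Gb Gc /(scP _ Gb) [p [Pp ->]] /(scP _ Gc) [q [Pq ->]]; apply/(scP _ Gc).
by exists (p *m q); rewrite mulmxA; split => //; apply: inP_mul.
Qed.

Lemma sc_mulr (a b h : M) : inG b -> inG h -> same_coset a b -> same_coset (a *m h) (b *m h).
Proof.
move=> Gb Gh /(scP _ Gb) [p [Pp ->]]; apply/(scP _ (inG_mul Gb Gh)).
by exists p; rewrite mulmxA.
Qed.

Lemma sc_Pl (p a : M) : inP p -> inG a -> same_coset (p *m a) a.
Proof. by move=> Pp Ga; apply/(scP _ Ga); exists p. Qed.

Lemma sc_inG (a b : M) : inG b -> same_coset a b -> inG a.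
Proof. by move=> Gb /(scP _ Gb) [p [[Gp _] ->]]; apply: inG_mul. Qed.

Lemma is_pt_act (x : trip R) h : is_pt x -> inG h -> is_pt (act x h).
Proof. by case=> [? [? ?]] Gh; split; [|split]; apply: inG_mul. Qed.

Lemma sp_refl (x : trip R) : is_pt x -> same_pt x x.
Proof. by case=> [? [? ?]]; split; [|split]; apply: sc_refl. Qed.

Lemma sp_sym (x y : trip R) : is_pt x -> is_pt y -> same_pt x y -> same_pt y x.
Proof. by case=> [? [? ?]] [? [? ?]] [? [? ?]]; split; [|split]; apply: sc_sym. Qed.

Lemma sp_trans (x y z : trip R) : is_pt y -> is_pt z -> same_pt x y -> same_pt y z -> same_pt x z.
Proof.
case=> [Y1 [Y2 Y3]] [Z1 [Z2 Z3]] [A1 [A2 A3]] [B1 [B2 B3]].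
split; [exact: sc_trans Y1 Z1 A1 B1|split; [exact: sc_trans Y2 Z2 A2 B2|exact: sc_trans Y3 Z3 A3 B3]].
Qed.

Lemma sp_act (x y : trip R) h : is_pt y -> inG h -> same_pt x y -> same_pt (act x h) (act y h).
Proof. by case=> [? [? ?]] Gh [? [? ?]]; split; [|split]; apply: sc_mulr. Qed.

Lemma sp_is_pt (x y : trip R) : is_pt y -> same_pt x y -> is_pt x.
Proof.
case=> [Y1 [Y2 Y3]] [A1 [A2 A3]].
split; [exact: sc_inG Y1 A1|split; [exact: sc_inG Y2 A2|exact: sc_inG Y3 A3]].
Qed.

Lemma act_act (x : trip R) g h : act (act x g) h = act x (g *m h).
Proof. by rewrite /act /t1 /t2 /t3 /= !mulmxA. Qed.

Lemma act_inv (x : trip R) g : inG g -> act (act x g) (invmx g) = x.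
Proof.
move=> /inG_unit ug; rewrite /act /t1 /t2 /t3 /= !mulmxK //.
by case: x => [[]].
Qed.

Lemma so_sym (x y : trip R) : is_pt x -> is_pt y -> same_orbit x y -> same_orbit y x.
Proof.
move=> px py [h [Gh H]]; exists (invmx h); split; first exact: inG_inv.
rewrite -{1}(act_inv x Gh); apply: sp_sym.
- exact: is_pt_act (is_pt_act px Gh) (inG_inv Gh).
- exact: is_pt_act py (inG_inv Gh).
by apply: sp_act => //; exact: inG_inv.
Qed.

Lemma so_trans (x y z : trip R) : is_pt y -> is_pt z -> same_orbit x y -> same_orbit y z -> same_orbit x z.
Proof.
move=> py pz [h [Gh H]] [k [Gk K]]; exists (h *m k); split; first exact: inG_mul.
rewrite -act_act; apply: (@sp_trans _ (act y k)) => //; first exact: is_pt_act.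
exact: sp_act.
Qed.


Lemma invmxM (A B : M) : A \in unitmx -> B \in unitmx -> invmx (A *m B) = invmx B *m invmx A.
Proof.
move=> uA uB; apply: invmx_eq.
by rewrite mulmxA -(mulmxA A) mulmxV // mulmx1 mulmxV.
Qed.

Lemma sc_upper (a b : M) : inG a -> inG b -> (same_coset a b <-> upper (a *m invmx b)).
Proof.
move=> Ga Gb; split; first by case.
by move=> U; split => //; apply: inG_mul => //; apply: inG_inv.
Qed.

Lemma tr_mx3 (a b c d e f g h k : R) : \tr (mx3 a b c d e f g h k) = a + e + k.
Proof. by rewrite /mxtrace !big_ord_recr big_ord0 /= !mxE /= add0r. Qed.

Lemma scale_mx3 (r a b c d e f g h k : R) : r *: mx3 a b c d e f g h k = mx3 (r*a) (r*b) (r*c) (r*d) (r*e) (r*f) (r*g) (r*h) (r*k).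
Proof.
apply/matrixP => i j; rewrite !mxE.
by case: i => [[|[|[|//]]] Hi]; case: j => [[|[|[|//]]] Hj].
Qed.

Lemma add_mx3 (a b c d e f g h k a' b' c' d' e' f' g' h' k' : R) :
  mx3 a b c d e f g h k + mx3 a' b' c' d' e' f' g' h' k' =
  mx3 (a+a') (b+b') (c+c') (d+d') (e+e') (f+f') (g+g') (h+h') (k+k').
Proof.
apply/matrixP => i j; rewrite !mxE.
by case: i => [[|[|[|//]]] Hi]; case: j => [[|[|[|//]]] Hj].
Qed.

Lemma zero_mx3 : (0 : M) = mx3 0 0 0 0 0 0 0 0 0.
Proof.
apply/matrixP => i j; rewrite !mxE.
by case: i => [[|[|[|//]]] Hi]; case: j => [[|[|[|//]]] Hj].
Qed.

Lemma mx3_gen (g : M) : exists a b c d e f h i k, g = mx3 a b c d e f h i k.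
Proof. by rewrite (mx3E g); do 9 eexists. Qed.

Lemma invz2 : invmx (z2 R) = mx3 0 (-1) 0 0 0 (-1) 1 0 0.
Proof. by apply: invmx_eq; rewrite /z2 mx3_mul one_mx3; congr mx3; ring. Qed.
Lemma invs1 : invmx (s1 R) = s1 R.
Proof. by apply: invmx_eq; rewrite /s1 mx3_mul one_mx3; congr mx3; ring. Qed.
Lemma invs2 : invmx (s2 R) = s2 R.
Proof. by apply: invmx_eq; rewrite /s2 mx3_mul one_mx3; congr mx3; ring. Qed.
Lemma invn (x y z : R) : invmx (nmx x y z) = nmx (-x) (x*z - y) (-z).
Proof. by apply: invmx_eq; rewrite /nmx mx3_mul one_mx3; congr mx3; ring. Qed.

Lemma Gz2 : inG (z2 R). Proof. by rewrite /inG /z2 det_mx3; ring. Qed.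
Lemma Gs1 : inG (s1 R). Proof. by rewrite /inG /s1 det_mx3; ring. Qed.
Lemma Gs2 : inG (s2 R). Proof. by rewrite /inG /s2 det_mx3; ring. Qed.
Lemma Gn (x y z : R) : inG (nmx x y z). Proof. by rewrite /inG /nmx det_mx3; ring. Qed.
Lemma Pn (x y z : R) : inP (nmx x y z). Proof. by split; [apply: Gn | apply/upper_mx3]. Qed.

Lemma inv_wn (w : M) (x y z : R) : inG w -> invmx (w *m nmx x y z) = nmx (-x) (x*z - y) (-z) *m invmx w.
Proof. by move=> Gw; rewrite invmxM ?invn //; apply: inG_unit => //; apply: Gn. Qed.


Lemma sc_up (a b : M) : inG a -> inG b -> upper (a *m invmx b) -> same_coset a b.
Proof. by move=> Ga Gb /(sc_upper Ga Gb). Qed.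

Ltac ginG := repeat first [apply: inG_mul | exact: inG1 | exact: Gz2 | exact: Gs1 | exact: Gs2 | exact: Gn | assumption].
Ltac scinv := rewrite ?invmx1 ?mulmx1 ?inv_wn ?invz2 ?invs1 ?invs2 ?invn; try exact: Gz2; try exact: Gs1; try exact: Gs2.
Ltac sccomp := apply: sc_up; [ginG | ginG | scinv; rewrite /z2 /s1 /s2 /nmx /dmx ?one_mx3 !mx3_mul; apply/upper_mx3; split].


Lemma stab_fwd (w g : M) : inG w -> stab (base_pt (z2 R) w) g ->
  [/\ inG g, upper g, upper (z2 R *m g *m invmx (z2 R)) & upper (w *m g *m invmx w)].
Proof.
move=> Gw [Gg [S1 [S2 S3]]]; rewrite /t1 /t2 /t3 /= in S1 S2 S3.
move/(sc_upper (inG_mul inG1 Gg) inG1): S1; rewrite invmx1 mulmx1 mul1mx => S1.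
move/(sc_upper (inG_mul Gz2 Gg) Gz2): S2 => S2.
by move/(sc_upper (inG_mul Gw Gg) Gw): S3.
Qed.

Ltac stab_eqs W g := 
  case/(stab_fwd W); scinv; rewrite /inG;
  case: (mx3_gen g) => [a [b [c [d [e [f [h [i [k ->]]]]]]]]];
  rewrite /z2 /s1 /s2 /nmx ?one_mx3 det_mx3 !mx3_mul => D /upper_mx3 [S1 S2 S3] /upper_mx3 [S4 S5 S6] /upper_mx3 [S7 S8 S9].

Lemma nz_of3 (a b c : R) : a * b * c = 1 -> [/\ a != 0, b != 0 & c != 0].
Proof.
move=> D; split; apply/eqP => x0; move: D; rewrite x0 !(mulr0, mul0r) => /eqP; by rewrite eq_sym oner_eq0.
Qed.

Lemma stab_zz1 (g : M) : stab (base_pt (z2 R) (z2 R *m nmx 0 0 1)) g <-> exists a : R, a != 0 /\ g = dmx (a ^-2) a a.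
Proof.
split.
  stab_eqs (inG_mul Gz2 (Gn 0 0 1)) g.
  have c0 : c = 0 by lra.
  have f0 : f = 0 by lra.
  have b0 : b = 0 by lra.
  have ke : k = e by lra.
  subst; rewrite !(mul0r, mulr0, subr0, addr0) in D.
  have [_ e0 _] := nz_of3 D.
  exists e; split => //; rewrite /dmx; congr mx3.
  by rewrite -[RHS]mul1r -D; field.
case=> a [a0 ->].
have Gg : inG (dmx (a ^-2) a a) by rewrite /inG /dmx det_mx3; field.
split => //.
rewrite /same_pt /act /t1 /t2 /t3 /=.
by split; [|split]; sccomp; field.
Qed.

Lemma stab_zz2 (g : M) : stab (base_pt (z2 R) (z2 R *m nmx 0 1 0)) g <->
  exists a z : R, a != 0 /\ g = mx3 a z 0 0 (a ^-2) 0 0 0 a.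
Proof.
split.
  stab_eqs (inG_mul Gz2 (Gn 0 1 0)) g.
  have c0 : c = 0 by lra.
  have f0 : f = 0 by lra.
  have ke : k = a by lra.
  subst; rewrite !(mul0r, mulr0, subr0, addr0) in D.
  have [a0 _ _] := nz_of3 D.
  exists a, b; split => //; congr mx3.
  by rewrite -[RHS]mul1r -D; field.
case=> a [z [a0 ->]].
have Gg : inG (mx3 a z 0 0 (a ^-2) 0 0 0 a) by rewrite /inG det_mx3; field.
split => //.
rewrite /same_pt /act /t1 /t2 /t3 /=.
by split; [|split]; sccomp; field.
Qed.

Definition DNp (g : M) := exists d x, inD d /\ g = d *m nmx x 0 0.

Lemma DN_fwd (a b e k : R) : a * e * k = 1 -> DNp (mx3 a b 0 0 e 0 0 0 k).
Proof.
move=> D; have [a0 _ _] := nz_of3 D.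
exists (dmx a e k), (b / a); split; first by exists a, e, k.
by rewrite /dmx /nmx mx3_mul; congr mx3; field.
Qed.

Lemma DN_bwd (g : M) : DNp g -> exists a b e k : R, a * e * k = 1 /\ g = mx3 a b 0 0 e 0 0 0 k.
Proof.
case=> _ [x [[a [b [c [D ->]]]] ->]]; exists a, (a * x), b, c; split => //.
by rewrite /dmx /nmx mx3_mul; congr mx3; ring.
Qed.



Lemma stab_zz3 (g : M) : stab (base_pt (z2 R) (z2 R *m nmx 0 0 0)) g <-> DNp g.
Proof.
split.
  stab_eqs (inG_mul Gz2 (Gn 0 0 0)) g.
  have c0 : c = 0 by lra.
  have f0 : f = 0 by lra.
  subst; rewrite !(mul0r, mulr0, subr0, addr0) in D.
  exact: DN_fwd.
case/DN_bwd => a [b [e [k [D ->]]]].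
have Gg : inG (mx3 a b 0 0 e 0 0 0 k) by rewrite /inG det_mx3 -D; ring.
split => //.
rewrite /same_pt /act /t1 /t2 /t3 /=.
have [a0 e0 k0] := nz_of3 D.
by split; [|split]; sccomp; field.
Qed.

Lemma stab_zs (g : M) : stab (base_pt (z2 R) (s1 R)) g <-> inD g.
Proof.
split.
  stab_eqs Gs1 g.
  have c0 : c = 0 by lra.
  have f0 : f = 0 by lra.
  have b0 : b = 0 by lra.
  subst; rewrite !(mul0r, mulr0, subr0, addr0) in D.
  by exists a, e, k.
case=> a [e [k [D ->]]].
have Gg : inG (dmx a e k) by rewrite /inG /dmx det_mx3 -D; ring.
split => //.
rewrite /same_pt /act /t1 /t2 /t3 /=.
have [a0 e0 k0] := nz_of3 D.
by split; [|split]; sccomp; field.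
Qed.

Lemma stab_z1 (g : M) : stab (base_pt (z2 R) 1%:M) g <-> DNp g.
Proof.
split.
  stab_eqs inG1 g.
  have c0 : c = 0 by lra.
  have f0 : f = 0 by lra.
  subst; rewrite !(mul0r, mulr0, subr0, addr0) in D.
  exact: DN_fwd.
case/DN_bwd => a [b [e [k [D ->]]]].
have Gg : inG (mx3 a b 0 0 e 0 0 0 k) by rewrite /inG det_mx3 -D; ring.
split => //.
rewrite /same_pt /act /t1 /t2 /t3 /=.
have [a0 e0 k0] := nz_of3 D.
by split; [|split]; sccomp; field.
Qed.

Lemma stab_zt1 (g : M) : stab (base_pt (z2 R) (s2 R *m nmx 0 0 1)) g <->
  exists a x : R, a != 0 /\ g = mx3 (a ^-2) x 0 0 a 0 0 0 a.
Proof.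
split.
  stab_eqs (inG_mul Gs2 (Gn 0 0 1)) g.
  have c0 : c = 0 by lra.
  have f0 : f = 0 by lra.
  have ke : k = e by lra.
  subst; rewrite !(mul0r, mulr0, subr0, addr0) in D.
  have [_ e0 _] := nz_of3 D.
  exists e, b; split => //; congr mx3.
  by rewrite -[RHS]mul1r -D; field.
case=> a [z [a0 ->]].
have Gg : inG (mx3 (a ^-2) z 0 0 a 0 0 0 a) by rewrite /inG det_mx3; field.
split => //.
rewrite /same_pt /act /t1 /t2 /t3 /=.
by split; [|split]; sccomp; field.
Qed.

Lemma stab_zt2 (g : M) : stab (base_pt (z2 R) (s2 R *m nmx 0 0 0)) g <-> DNp g.
Proof.
split.
  stab_eqs (inG_mul Gs2 (Gn 0 0 0)) g.
  have c0 : c = 0 by lra.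
  have f0 : f = 0 by lra.
  subst; rewrite !(mul0r, mulr0, subr0, addr0) in D.
  exact: DN_fwd.
case/DN_bwd => a [b [e [k [D ->]]]].
have Gg : inG (mx3 a b 0 0 e 0 0 0 k) by rewrite /inG det_mx3 -D; ring.
split => //.
rewrite /same_pt /act /t1 /t2 /t3 /=.
have [a0 e0 k0] := nz_of3 D.
by split; [|split]; sccomp; field.
Qed.

End M3.

Section M3b.
Variable R : realType.
Local Notation M := 'M[R]_3.
Ltac ginG := repeat first [apply: inG_mul | exact: inG1 | exact: Gz2 | exact: Gs1 | exact: Gs2 | exact: Gn | assumption].
Ltac scinv := rewrite ?invmx1 ?mulmx1 ?inv_wn ?invz2 ?invs1 ?invs2 ?invn; try exact: Gz2; try exact: Gs1; try exact: Gs2.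
Ltac sccomp := apply: sc_up; [ginG | ginG | scinv; rewrite /z2 /s1 /s2 /nmx /dmx ?one_mx3 !mx3_mul; apply/upper_mx3; split].


Ltac stab_eqs W g := 
  case/(stab_fwd W); scinv; rewrite /inG;
  case: (mx3_gen g) => [a [b [c [d [e [f [h [i [k ->]]]]]]]]];
  rewrite /z2 /s1 /s2 /nmx ?one_mx3 det_mx3 !mx3_mul => D /upper_mx3 [S1 S2 S3] /upper_mx3 [S4 S5 S6] /upper_mx3 [S7 S8 S9].

Lemma mem_span3 (A B C X : M) : X \in <<[:: A; B; C]>>%VS <-> exists k1 k2 k3, X = k1 *: A + k2 *: B + k3 *: C.
Proof.
rewrite span_cons span_cons span_seq1; split.
  case/memv_addP => u /vlineP [k1 ->] [v /memv_addP [v1 /vlineP [k2 ->] [v2 /vlineP [k3 ->] ->]] ->].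
  by exists k1, k2, k3; rewrite addrA.
case=> k1 [k2 [k3 ->]]; rewrite -addrA; apply: memv_add; first exact: memvZ (memv_line _).
by apply: memv_add; exact: memvZ (memv_line _).
Qed.

Lemma mem_span2 (A B X : M) : X \in <<[:: A; B]>>%VS <-> exists k1 k2, X = k1 *: A + k2 *: B.
Proof.
rewrite span_cons span_seq1; split.
  case/memv_addP => u /vlineP [k1 ->] [v /vlineP [k2 ->] ->].
  by exists k1, k2.
case=> k1 [k2 ->]; apply: memv_add; exact: memvZ (memv_line _).
Qed.

Lemma dim_span3 (A B C : M) :
  (forall k1 k2 k3, k1 *: A + k2 *: B + k3 *: C = 0 -> [/\ k1 = 0, k2 = 0 & k3 = 0]) ->
  \dim <<[:: A; B; C]>>%VS = 3%N.
Proof.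
move=> H; suff /eqP : free [:: A; B; C] by [].
apply/(@freeP _ _ _ (in_tuple [:: A; B; C])) => k; rewrite !big_ord_recr big_ord0 /= add0r => /H [].
move=> E0 E1 E2 [[|[|[|//]]] Hi].
- by rewrite -E0; congr k; apply: val_inj.
- by rewrite -E1; congr k; apply: val_inj.
- by rewrite -E2; congr k; apply: val_inj.
Qed.

Lemma dim_span2 (A B : M) :
  (forall k1 k2, k1 *: A + k2 *: B = 0 -> k1 = 0 /\ k2 = 0) ->
  \dim <<[:: A; B]>>%VS = 2%N.
Proof.
move=> H; suff /eqP : free [:: A; B] by [].
apply/(@freeP _ _ _ (in_tuple [:: A; B])) => k; rewrite !big_ord_recr big_ord0 /= add0r => /H [].
move=> E0 E1 [[|[|//]] Hi].
- by rewrite -E0; congr k; apply: val_inj.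
- by rewrite -E1; congr k; apply: val_inj.
Qed.

Definition E11m : M := mx3 1 0 0 0 0 0 0 0 (-1).
Definition E22m : M := mx3 0 0 0 0 1 0 0 0 (-1).
Definition E12m : M := mx3 0 1 0 0 0 0 0 0 0.

Ltac lie_eqs X :=
  rewrite /stab_lie /t1 /t2 /t3 /=; scinv;
  case: (mx3_gen X) => [a [b [c [d [e [f [h [i [k ->]]]]]]]]];
  rewrite /z2 /s1 /s2 /nmx ?one_mx3 tr_mx3 !mx3_mul.

Lemma dim3 : \dim <<[:: E11m; E22m; E12m]>>%VS = 3%N.
Proof.
apply: dim_span3 => k1 k2 k3; rewrite /E11m /E22m /E12m !scale_mx3 !add_mx3 zero_mx3.
by case/mx3_inj => [E1 E2 _ _ [E3 _ _ _ _]]; split; lra.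
Qed.


Ltac lie_sound :=
  rewrite /stab_lie /t1 /t2 /t3 /=; scinv;
  rewrite /z2 /s1 /s2 /nmx ?one_mx3 tr_mx3 !mx3_mul; split; [ring|];
  split; [apply/upper_mx3; split; ring|]; split; apply/upper_mx3; split; ring.

Ltac lie_pre X :=
  rewrite /stab_lie /t1 /t2 /t3 /=; scinv;
  case: (mx3_gen X) => [a [b [c [d [e [f [h [i [k ->]]]]]]]]];
  rewrite /z2 /s1 /s2 /nmx ?one_mx3 tr_mx3 !mx3_mul;
  case=> T [/upper_mx3 [S1 S2 S3] [/upper_mx3 [S4 S5 S6] /upper_mx3 [S7 S8 S9]]].

Lemma od_zz3 : orbit_dim (base_pt (z2 R) (z2 R *m nmx 0 0 0)) 5.
Proof.
exists <<[:: E11m; E22m; E12m]>>%VS; split; last by rewrite dim3.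
move=> X; split; [case/mem_span3 => k1 [k2 [k3 ->]]; rewrite /E11m /E22m /E12m !scale_mx3 !add_mx3; lie_sound
  | lie_pre X; apply/mem_span3; exists a, e, b; rewrite /E11m /E22m /E12m !scale_mx3 !add_mx3; congr mx3; lra].
Qed.
Lemma od_z1 : orbit_dim (base_pt (z2 R) 1%:M) 5.
Proof.
exists <<[:: E11m; E22m; E12m]>>%VS; split; last by rewrite dim3.
move=> X; split; [case/mem_span3 => k1 [k2 [k3 ->]]; rewrite /E11m /E22m /E12m !scale_mx3 !add_mx3; lie_sound
  | lie_pre X; apply/mem_span3; exists a, e, b; rewrite /E11m /E22m /E12m !scale_mx3 !add_mx3; congr mx3; lra].
Qed.
Lemma od_zt2 : orbit_dim (base_pt (z2 R) (s2 R *m nmx 0 0 0)) 5.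
Proof.
exists <<[:: E11m; E22m; E12m]>>%VS; split; last by rewrite dim3.
move=> X; split; [case/mem_span3 => k1 [k2 [k3 ->]]; rewrite /E11m /E22m /E12m !scale_mx3 !add_mx3; lie_sound
  | lie_pre X; apply/mem_span3; exists a, e, b; rewrite /E11m /E22m /E12m !scale_mx3 !add_mx3; congr mx3; lra].
Qed.

Definition Azz2 : M := mx3 1 0 0 0 (-2) 0 0 0 1.
Definition Azt1 : M := mx3 (-2) 0 0 0 1 0 0 0 1.

Lemma od_zz2 : orbit_dim (base_pt (z2 R) (z2 R *m nmx 0 1 0)) 6.
Proof.
exists <<[:: Azz2; E12m]>>%VS; split.
  move=> X; split; [case/mem_span2 => k1 [k2 ->]; rewrite /Azz2 /E12m !scale_mx3 !add_mx3; lie_sound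
  | lie_pre X; apply/mem_span2; exists a, b; rewrite /Azz2 /E12m !scale_mx3 !add_mx3; congr mx3; lra].
rewrite dim_span2 // => k1 k2; rewrite /Azz2 /E12m !scale_mx3 !add_mx3 zero_mx3.
by case/mx3_inj => [E1 E2 _ _ _]; split; lra.
Qed.

Lemma od_zt1 : orbit_dim (base_pt (z2 R) (s2 R *m nmx 0 0 1)) 6.
Proof.
exists <<[:: Azt1; E12m]>>%VS; split.
  move=> X; split; [case/mem_span2 => k1 [k2 ->]; rewrite /Azt1 /E12m !scale_mx3 !add_mx3; lie_sound
  | lie_pre X; apply/mem_span2; exists e, b; rewrite /Azt1 /E12m !scale_mx3 !add_mx3; congr mx3; lra].
rewrite dim_span2 // => k1 k2; rewrite /Azt1 /E12m !scale_mx3 !add_mx3 zero_mx3.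
by case/mx3_inj => [E1 E2 _ _ _]; split; lra.
Qed.

Lemma od_zs : orbit_dim (base_pt (z2 R) (s1 R)) 6.
Proof.
exists <<[:: E11m; E22m]>>%VS; split.
  move=> X; split; [case/mem_span2 => k1 [k2 ->]; rewrite /E11m /E22m !scale_mx3 !add_mx3; lie_sound
  | lie_pre X; apply/mem_span2; exists a, e; rewrite /E11m /E22m !scale_mx3 !add_mx3; congr mx3; lra].
rewrite dim_span2 // => k1 k2; rewrite /E11m /E22m !scale_mx3 !add_mx3 zero_mx3.
by case/mx3_inj => [E1 _ _ _ [E2 _ _ _ _]]; split; lra.
Qed.

Lemma od_zz1 : orbit_dim (base_pt (z2 R) (z2 R *m nmx 0 0 1)) 7.
Proof.
exists <[Azt1]>%VS; split.
  move=> X; split; [case/vlineP => k1 ->; rewrite /Azt1 !scale_mx3; lie_sound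
  | lie_pre X; apply/vlineP; exists e; rewrite /Azt1 !scale_mx3; congr mx3; lra].
rewrite dim_vline; case: eqP => //; rewrite /Azt1 zero_mx3.
by case/mx3_inj => [_ _ _ _ [/eqP]]; rewrite oner_eq0.
Qed.

End M3b.

Section M3c.
Variable R : realType.
Local Notation M := 'M[R]_3.
Ltac ginG := repeat first [apply: inG_mul | exact: inG1 | exact: Gz2 | exact: Gs1 | exact: Gs2 | exact: Gn | assumption].
Ltac scinv := rewrite ?invmx1 ?mulmx1 ?inv_wn ?invz2 ?invs1 ?invs2 ?invn; try exact: Gz2; try exact: Gs1; try exact: Gs2.
Ltac sccomp := apply: sc_up; [ginG | ginG | scinv; rewrite /z2 /s1 /s2 /nmx /dmx ?one_mx3 !mx3_mul; apply/upper_mx3; split].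



Lemma scI (a b p : M) : inG b -> inP p -> a = p *m b -> same_coset a b.
Proof. by move=> Gb Pp E; apply: (proj2 (scP a Gb)); exists p. Qed.

Lemma is_pt_base (a b : M) : inG a -> inG b -> is_pt (base_pt a b).
Proof. by move=> Ga Gb; split; [exact: inG1 | split]. Qed.

Lemma cell_red (v w : M) (x : trip R) : inG v -> inG w -> is_pt x -> in_cell v w x ->
  exists r, inP r /\ same_orbit x (base_pt v (w *m r)).
Proof.
move=> Gv Gw px [a [b [g [[p1 [q1 [P1 [Q1 ->]]]] [[p2 [q2 [P2 [Q2 ->]]] [Gg S]]]]]]].
have Gq1 := proj1 Q1; have Gq2 := proj1 Q2; have Gp1 := proj1 P1; have Gp2 := proj1 P2.
have py : is_pt (base_pt (p1 *m v *m q1) (p2 *m w *m q2)) by apply: is_pt_base; ginG.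
exists (q2 *m invmx q1); split; first by apply: inP_mul => //; apply: inP_inv.
apply: (@so_trans _ _ (base_pt (p1 *m v *m q1) (p2 *m w *m q2))) => //.
  apply: is_pt_base => //; ginG; exact: inG_inv.
  exists (invmx g); split; first exact: inG_inv.
  rewrite -[X in same_pt _ X](act_inv _ Gg); apply: sp_act => //; last exact: inG_inv.
  exact: is_pt_act.
exists (invmx q1); split; first exact: inG_inv.
have uq1 := inG_unit Gq1.
rewrite /same_pt /act /base_pt /t1 /t2 /t3 /= mulmxK // mul1mx; split; [|split].
- by apply: (@scI _ _ (invmx q1) (@inG1 R)); [exact: inP_inv | rewrite mulmx1].
- exact: sc_Pl.
- rewrite -!mulmxA; apply: sc_Pl => //; ginG; exact: inG_inv.
Qed.

Lemma cell_intro (v w n : M) (x : trip R) : inG v -> inG w -> inP n -> is_pt x ->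
  same_orbit x (base_pt v (w *m n)) -> in_cell v w x.
Proof.
move=> Gv Gw Pn px [h [Gh S]].
exists v, (w *m n), (invmx h); split.
  by exists 1%:M, 1%:M; rewrite mul1mx mulmx1; split; [exact: inP1|split; [exact: inP1|]].
split.
  by exists 1%:M, n; rewrite mul1mx; split; [exact: inP1|split].
split; first exact: inG_inv.
rewrite -[X in same_pt X _](act_inv _ Gh); apply: sp_act => //; last exact: inG_inv.
by apply: is_pt_base; ginG; case: Pn.
Qed.

Lemma orbit_by (v w r n t : M) : inG v -> inG w -> inP t ->
  same_coset (v *m t) v -> same_coset (w *m r *m t) (w *m n) ->
  same_orbit (base_pt v (w *m r)) (base_pt v (w *m n)).
Proof.
move=> Gv Gw Pt S2 S3; exists t; split; first by case: Pt.
rewrite /same_pt /act /base_pt /t1 /t2 /t3 /=; split; [|split] => //.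
by apply: (@scI _ _ t (@inG1 R)) => //; rewrite mul1mx mulmx1.
Qed.

Lemma so_fwd (w w' h : M) : inG w -> inG w' -> inG h /\ same_pt (act (base_pt (z2 R) w) h) (base_pt (z2 R) w') ->
  [/\ inG h, upper h, upper (z2 R *m h *m invmx (z2 R)) & upper (w *m h *m invmx w')].
Proof.
move=> Gw Gw' [Gg [S1 [S2 S3]]]; rewrite /base_pt /t1 /t2 /t3 /= in S1 S2 S3.
move/(sc_upper (inG_mul (@inG1 R) Gg) (@inG1 R)): S1; rewrite invmx1 mulmx1 mul1mx => S1.
move/(sc_upper (inG_mul (@Gz2 R) Gg) (@Gz2 R)): S2 => S2.
by move/(sc_upper (inG_mul Gw Gg) Gw'): S3.
Qed.

Ltac so_eqs W W' g :=
  case=> g /(so_fwd W W'); case; scinv; rewrite /inG;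
  case: (mx3_gen g) => [a [b [c [d [e [f [h [i [k ->]]]]]]]]];
  rewrite /z2 /s1 /s2 /nmx ?one_mx3 det_mx3 !mx3_mul => D /upper_mx3 [S1 S2 S3] /upper_mx3 [S4 S5 S6] /upper_mx3 [S7 S8 S9].

Lemma ne12 : ~ same_orbit (base_pt (z2 R) (z2 R *m nmx 0 0 1)) (base_pt (z2 R) (z2 R *m nmx 0 1 0)).
Proof.
so_eqs (inG_mul (@Gz2 R) (@Gn R 0 0 1)) (inG_mul (@Gz2 R) (@Gn R 0 1 0)) g.
have k0 : k = 0 by lra.
subst; lra.
Qed.

Lemma ne13 : ~ same_orbit (base_pt (z2 R) (z2 R *m nmx 0 0 1)) (base_pt (z2 R) (z2 R *m nmx 0 0 0)).
Proof.
so_eqs (inG_mul (@Gz2 R) (@Gn R 0 0 1)) (inG_mul (@Gz2 R) (@Gn R 0 0 0)) g.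
have k0 : k = 0 by lra.
subst; lra.
Qed.

Lemma ne23 : ~ same_orbit (base_pt (z2 R) (z2 R *m nmx 0 1 0)) (base_pt (z2 R) (z2 R *m nmx 0 0 0)).
Proof.
so_eqs (inG_mul (@Gz2 R) (@Gn R 0 1 0)) (inG_mul (@Gz2 R) (@Gn R 0 0 0)) g.
have k0 : k = 0 by lra.
subst; lra.
Qed.

Lemma net : ~ same_orbit (base_pt (z2 R) (s2 R *m nmx 0 0 1)) (base_pt (z2 R) (s2 R *m nmx 0 0 0)).
Proof.
so_eqs (inG_mul (@Gs2 R) (@Gn R 0 0 1)) (inG_mul (@Gs2 R) (@Gn R 0 0 0)) g.
have k0 : k = 0 by lra.
subst; lra.
Qed.

End M3c.

Section M3d.
Variable R : realType.
Local Notation M := 'M[R]_3.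
Ltac ginG := repeat first [apply: inG_mul | exact: inG1 | exact: Gz2 | exact: Gs1 | exact: Gs2 | exact: Gn | assumption].
Ltac scinv := rewrite ?invmx1 ?mulmx1 ?invmx1 ?inv_wn ?invz2 ?invs1 ?invs2 ?invn; try exact: Gz2; try exact: Gs1; try exact: Gs2.
Ltac sccomp := apply: sc_up; [ginG | ginG | scinv; rewrite /z2 /s1 /s2 /nmx /dmx ?one_mx3 !mx3_mul; apply/upper_mx3; split].




Ltac fld := field; repeat (apply/andP; split); try done.

Lemma so_step (v w r n : M) (x : trip R) : same_orbit x (base_pt v (w *m r)) -> inG v -> inG w -> inG r -> inG n ->
  same_orbit (base_pt v (w *m r)) (base_pt v (w *m n)) -> same_orbit x (base_pt v (w *m n)).
Proof.
move=> So Gv Gw Gr Gn; apply: so_trans So; apply: is_pt_base => //; exact: inG_mul.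
Qed.

Lemma cell_a (x : trip R) : is_pt x -> (in_cell (z2 R) (z2 R) x <->
  same_orbit x (base_pt (z2 R) (z2 R *m nmx 0 0 1)) \/ same_orbit x (base_pt (z2 R) (z2 R *m nmx 0 1 0)) \/
  same_orbit x (base_pt (z2 R) (z2 R *m nmx 0 0 0))).
Proof.
move=> px; split; last first.
  case=> [|[]]; apply: cell_intro => //; (exact: Gz2 || exact: Pn).
case/(cell_red (@Gz2 R) (@Gz2 R) px) => r [[Gr Ur] So].
have Hp : forall n, is_pt (base_pt (z2 R) (z2 R *m nmx 0 0 n)) by move=> n; apply: is_pt_base; ginG.
have Hp' : is_pt (base_pt (z2 R) (z2 R *m nmx 0 1 0)) by apply: is_pt_base; ginG.
move: Gr Ur So; case: (mx3_gen r) => [a [b [c [d [e [f [h [i [k ->]]]]]]]]].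
rewrite /inG det_mx3 => D /upper_mx3 [d0 h0 i0] So; subst.
rewrite !(mul0r, mulr0, subr0, addr0) in D.
have [a0 e0 k0] := nz_of3 D.
have Gr : inG (mx3 a b c 0 e f 0 0 k) by rewrite /inG det_mx3 -D; ring.
have [f0|f0] := eqVneq f 0.
  subst; have [c0|c0] := eqVneq c 0.
    subst; right; right; apply: (so_step So); try exact: Gz2; try exact: Gn; try assumption.
    apply: (orbit_by (t := 1%:M)) => //; try exact: Gz2; first exact: inP1.
      rewrite mulmx1; apply: sc_refl; exact: Gz2.
    sccomp; fld.
  right; left; apply: (so_step So); try exact: Gz2; try exact: Gn; try assumption.
  apply: (orbit_by (t := (dmx (c / a) (a / c) 1))) => //; try exact: Gz2.
      split; [by rewrite /inG /dmx det_mx3; fld | by rewrite /dmx; apply/upper_mx3].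
    have Gd : inG (dmx (c / a) (a / c) 1) by rewrite /inG /dmx det_mx3; fld.
    sccomp; fld.
  have Gd : inG (dmx (c / a) (a / c) 1) by rewrite /inG /dmx det_mx3; fld.
  sccomp; fld.
left; apply: (so_step So); try exact: Gz2; try exact: Gn; try assumption.
set t := mx3 (e / f) ((c - b * (f / e)) / a) 0 0 (f / e) 0 0 0 1.
have Gt : inG t by rewrite /inG /t det_mx3; fld.
apply: (orbit_by (t := t)) => //; try exact: Gz2.
    split => //; by apply/upper_mx3.
  sccomp; rewrite /t; fld.
sccomp; rewrite /t; fld.
Qed.

Lemma cell_b (x : trip R) : is_pt x -> (in_cell (z2 R) (s1 R) x <-> same_orbit x (base_pt (z2 R) (s1 R *m 1%:M))).
Proof.
move=> px; split; last first.
  apply: cell_intro => //; (exact: Gz2 || exact: Gs1 || exact: inP1).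
case/(cell_red (@Gz2 R) (@Gs1 R) px) => r [[Gr Ur] So].
move: Gr Ur So; case: (mx3_gen r) => [a [b [c [d [e [f [h [i [k ->]]]]]]]]].
rewrite /inG det_mx3 => D /upper_mx3 [d0 h0 i0] So; subst.
rewrite !(mul0r, mulr0, subr0, addr0) in D.
have [a0 e0 k0] := nz_of3 D.
have Gr : inG (mx3 a b c 0 e f 0 0 k) by rewrite /inG det_mx3 -D; ring.
apply: (so_step So); try exact: Gz2; try exact: Gs1; try exact: inG1; try assumption.
have Gt := Gn (- b / a) 0 0.
apply: (orbit_by (t := nmx (- b / a) 0 0)) => //; try exact: Gz2; try exact: Gs1; first exact: Pn.
  sccomp; fld.
sccomp; fld.
Qed.

Lemma cell_1 (x : trip R) : is_pt x -> (in_cell (z2 R) 1%:M x <-> same_orbit x (base_pt (z2 R) (1%:M *m 1%:M))).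
Proof.
move=> px; split; last first.
  apply: cell_intro => //; (exact: Gz2 || exact: inG1 || exact: inP1).
case/(cell_red (@Gz2 R) (@inG1 R) px) => r [[Gr Ur] So].
move: Gr Ur So; case: (mx3_gen r) => [a [b [c [d [e [f [h [i [k ->]]]]]]]]].
rewrite /inG det_mx3 => D /upper_mx3 [d0 h0 i0] So; subst.
rewrite !(mul0r, mulr0, subr0, addr0) in D.
have [a0 e0 k0] := nz_of3 D.
have Gr : inG (mx3 a b c 0 e f 0 0 k) by rewrite /inG det_mx3 -D; ring.
apply: (so_step So); try exact: Gz2; try exact: inG1; try assumption.
apply: (orbit_by (t := 1%:M)) => //; try exact: Gz2; try exact: inG1; first exact: inP1.
  rewrite mulmx1; apply: sc_refl; exact: Gz2.
sccomp; fld.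
Qed.

Lemma cell_c (x : trip R) : is_pt x -> (in_cell (z2 R) (s2 R) x <->
  same_orbit x (base_pt (z2 R) (s2 R *m nmx 0 0 1)) \/ same_orbit x (base_pt (z2 R) (s2 R *m nmx 0 0 0))).
Proof.
move=> px; split; last first.
  case=> ?; apply: cell_intro; eauto; (exact: Gz2 || exact: Gs2 || exact: Pn).
case/(cell_red (@Gz2 R) (@Gs2 R) px) => r [[Gr Ur] So].
move: Gr Ur So; case: (mx3_gen r) => [a [b [c [d [e [f [h [i [k ->]]]]]]]]].
rewrite /inG det_mx3 => D /upper_mx3 [d0 h0 i0] So; subst.
rewrite !(mul0r, mulr0, subr0, addr0) in D.
have [a0 e0 k0] := nz_of3 D.
have Gr : inG (mx3 a b c 0 e f 0 0 k) by rewrite /inG det_mx3 -D; ring.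
have [f0|f0] := eqVneq f 0.
  subst; right; apply: (so_step So); try exact: Gz2; try exact: Gs2; try exact: Gn; try assumption.
  apply: (orbit_by (t := 1%:M)) => //; try exact: Gz2; try exact: Gs2; first exact: inP1.
    rewrite mulmx1; apply: sc_refl; exact: Gz2.
  sccomp; fld.
left; apply: (so_step So); try exact: Gz2; try exact: Gs2; try exact: Gn; try assumption.
have Gd : inG (dmx (e / f) (f / e) 1) by rewrite /inG /dmx det_mx3; fld.
apply: (orbit_by (t := (dmx (e / f) (f / e) 1))) => //; try exact: Gz2; try exact: Gs2.
    by split => //; rewrite /dmx; apply/upper_mx3.
  sccomp; fld.
sccomp; fld.
Qed.

End M3d.

Unset Implicit Arguments.
Unset Strict Implicit.
Theorem mainTheorem10 (R : realType) :
  let zz1 := base_pt (z2 R) (z2 R *m nmx 0 0 1) in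
  let zz2 := base_pt (z2 R) (z2 R *m nmx 0 1 0) in
  let zz3 := base_pt (z2 R) (z2 R *m nmx 0 0 0) in
  let zs := base_pt (z2 R) (s1 R) in
  let z1 := base_pt (z2 R) 1%:M in
  let zt1 := base_pt (z2 R) (s2 R *m nmx 0 0 1) in
  let zt2 := base_pt (z2 R) (s2 R *m nmx 0 0 0) in
  let DN := fun g : 'M[R]_3 =>
    exists d x, inD d /\ g = d *m nmx x 0 0 in
  (* (a) *)
  ((forall x, is_pt x ->
      (in_cell (z2 R) (z2 R) x <->
        same_orbit x zz1 \/ same_orbit x zz2 \/ same_orbit x zz3))
   /\ ~ same_orbit zz1 zz2 /\ ~ same_orbit zz1 zz3 /\ ~ same_orbit zz2 zz3
   /\ orbit_dim zz1 7 /\ orbit_dim zz2 6 /\ orbit_dim zz3 5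
   /\ (forall g, stab zz1 g <-> exists a : R, a != 0 /\ g = dmx (a ^-2) a a)
   /\ (forall g, stab zz2 g <->
         exists a z : R, a != 0 /\ g = mx3 a z 0 0 (a ^-2) 0 0 0 a)
   /\ (forall g, stab zz3 g <-> DN g))
  /\
  (* (b) *)
  ((forall x, is_pt x -> (in_cell (z2 R) (s1 R) x <-> same_orbit x zs))
   /\ orbit_dim zs 6 /\ (forall g, stab zs g <-> inD g)
   /\ (forall x, is_pt x -> (in_cell (z2 R) 1%:M x <-> same_orbit x z1))
   /\ orbit_dim z1 5 /\ (forall g, stab z1 g <-> DN g))
  /\
  (* (c) *)
  ((forall x, is_pt x ->
      (in_cell (z2 R) (s2 R) x <-> same_orbit x zt1 \/ same_orbit x zt2))
   /\ ~ same_orbit zt1 zt2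
   /\ orbit_dim zt1 6 /\ orbit_dim zt2 5
   /\ (forall g, stab zt1 g <->
         exists a x : R, a != 0 /\ g = mx3 (a ^-2) x 0 0 a 0 0 0 a)
   /\ (forall g, stab zt2 g <-> DN g)).
Proof.
move=> zz1 zz2 zz3 zs z1 zt1 zt2 DN.
split; [|split].
- split; first exact: cell_a.
  split; first exact: ne12.
  split; first exact: ne13.
  split; first exact: ne23.
  split; first exact: od_zz1.
  split; first exact: od_zz2.
  split; first exact: od_zz3.
  split; first exact: stab_zz1.
  split; first exact: stab_zz2.
  exact: stab_zz3.
- split; first by move=> x px; have := cell_b px; rewrite mulmx1.
  split; first exact: od_zs.
  split; first exact: stab_zs.
  split; first by move=> x px; have := cell_1 px; rewrite mulmx1.
  split; first exact: od_z1.
  exact: stab_z1.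
- split; first exact: cell_c.
  split; first exact: net.
  split; first exact: od_zt1.
  split; first exact: od_zt2.
  split; first exact: stab_zt1.
  exact: stab_zt2.
Qed.
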